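(* For every $\lambda,\lambda'\in\mathbf{R}$ there exists an integer $l\geq 0$ such that for every $f\in\mathcal{C}^{\lambda\text{-an}}(\mathbf{Z}_p^d,M)$, the restriction $f|_{p^l\mathbf{Z}_p^d}$ lies in $\mathcal{C}^{\lambda'\text{-an}}(p^l\mathbf{Z}_p^d,M)$, i.e. the function $\underline{x}\mapsto f(p^l\underline{x})$ lies in $\mathcal{C}^{\lambda'\text{-an}}(\mathbf{Z}_p^d,M)$.
   Context: A valuation on a ring (or module) is a map $\mathrm{val}$ to $(-\infty,\infty]$ with $\mathrm{val}(x)=\infty$ iff $x=0$, $\mathrm{val}(xy)\geq\mathrm{val}(x)+\mathrm{val}(y)$ (for modules: $\mathrm{val}(rm)\geq \mathrm{val}(r)+\mathrm{val}(m)$) and $\mathrm{val}(x+y)\geq\min(\mathrm{val}(x),\mathrm{val}(y))$. Let $R$ be a $\mathbf{Z}_p$-algebra which is a Tate ring with a valuation $\mathrm{val}_R$ such that $\mathrm{val}_R(p)>0$, and let $M$ be an $R$-module with a compatible valuation $\mathrm{val}_M$. For $\underline{y}\in\mathbf{Z}_p^d$ and $f:\mathbf{Z}_p^d\to M$ put $\Delta_{\underline{y}}(f)(\underline{x})=f(\underline{x}+\underline{y})-f(\underline{x})$. Let $1_i$ be the $i$-th standard basis vector, $\Delta_i=\Delta_{1_i}$, $\Delta^{\underline{n}}=\Delta_1^{n_1}\circ\cdots\circ\Delta_d^{n_d}$ for $\underline{n}\in\mathbf{Z}_{\geq0}^d$, and $a_{\underline{n}}(f)=\Delta^{\underline{n}}(f)(\underline{0})$,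 $|\underline{n}|=\sum_i n_i$. Let $\mathcal{C}^{\lambda\text{-an}}(\mathbf{Z}_p^d,M)$ be the set of continuous $f:\mathbf{Z}_p^d\to M$ with $\mathrm{val}_M(a_{\underline{n}}(f))-p^\lambda|\underline{n}|\to\infty$ as $|\underline{n}|\to\infty$. The space $\mathcal{C}^{\lambda'\text{-an}}(p^l\mathbf{Z}_p^d,M)$ is defined by transporting this definition along the homeomorphism $\mathbf{Z}_p^d\to p^l\mathbf{Z}_p^d$, $\underline{x}\mapsto p^l\underline{x}$. *)

(* Defs.v *)
From HB Require Import structures.
From mathcomp Require Import all_boot all_order all_algebra.
From mathcomp Require Import all_classical all_reals all_analysis.
From mathcomp Require Import Rstruct Rstruct_topology.
Set Implicit Arguments.
Unset Strict Implicit.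
Unset Printing Implicit Defensive.
Import Order.TTheory GRing.Theory Num.Theory.

(* p-adic integers Z_p as the inverse limit of Z/p^n Z:                *)
Definition zp_cond (p : nat) (x : nat -> nat) : Prop :=
  forall n, x n.+1 %% p ^ n = x n /\ x n %% p ^ n = x n.

Record Zpadic (p : nat) := MkZp { zval :> nat -> nat ; zvalP : zp_cond p zval }.

Lemma zp_op_cond p (x : Zpadic p) (op : nat -> nat -> nat) (y : Zpadic p) :
  (forall a b c d n, a = c %[mod p ^ n] -> b = d %[mod p ^ n] ->
      op a b = op c d %[mod p ^ n]) ->
  zp_cond p (fun n => op (x n) (y n) %% p ^ n).
Proof.
move=> hop n; split; last by rewrite modn_mod.
have hd : p ^ n %| p ^ n.+1 by rewrite expnS dvdn_mull.
rewrite modn_dvdm //; apply: hop.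
- by have [-> ->] := zvalP x n.
- by have [-> ->] := zvalP y n.
Qed.

Lemma zp_add_op p a b c d n : a = c %[mod p ^ n] -> b = d %[mod p ^ n] ->
  a + b = c + d %[mod p ^ n].
Proof. by move=> ha hb; rewrite -modnDm ha hb modnDm. Qed.

Lemma zp_mul_op p a b c d n : a = c %[mod p ^ n] -> b = d %[mod p ^ n] ->
  a * b = c * d %[mod p ^ n].
Proof. by move=> ha hb; rewrite -modnMm ha hb modnMm. Qed.

Definition zp_add p (x y : Zpadic p) : Zpadic p := MkZp (zp_op_cond x y (@zp_add_op p)).
Definition zp_mul p (x y : Zpadic p) : Zpadic p := MkZp (zp_op_cond x y (@zp_mul_op p)).

Lemma zp_nat_cond p k : zp_cond p (fun n => k %% p ^ n).
Proof.
move=> n; split; last by rewrite modn_mod.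
by rewrite modn_dvdm // expnS dvdn_mull.
Qed.

Definition zp_nat (p k : nat) : Zpadic p := MkZp (zp_nat_cond p k).
Definition zp_one (p : nat) : Zpadic p := zp_nat p 1.

Local Open Scope ring_scope.
Local Open Scope ereal_scope.

Definition is_ring_valuation (A : comNzRingType) (v : A -> \bar Rdefinitions.R) : Prop :=
  [/\ forall x, v x = +oo <-> x = 0%R,
      forall x, v x != -oo,
      forall x y, v x + v y <= v (x * y)%R
    & forall x y, Order.min (v x) (v y) <= v (x + y)%R].

Definition is_module_valuation (A : comNzRingType) (vA : A -> \bar Rdefinitions.R)
    (M : lmodType A) (v : M -> \bar Rdefinitions.R) : Prop :=
  [/\ forall m, v m = +oo <-> m = 0%R,
      forall m, v m != -oo,
      forall (r : A) m, vA r + v m <= v (r *: m)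
    & forall m n, Order.min (v m) (v n) <= v (m + n)%R].

Definition is_Zp_algebra_map (p : nat) (A : comNzRingType) (phi : Zpadic p -> A) : Prop :=
  [/\ forall x y, phi (zp_add x y) = (phi x + phi y)%R,
      forall x y, phi (zp_mul x y) = (phi x * phi y)%R
    & phi (zp_one p) = 1%R].

(* Tate ring (topology defined by the valuation): A has a topologically
   nilpotent unit *)
Definition is_Tate_valued (A : comNzRingType) (v : A -> \bar Rdefinitions.R) : Prop :=
  exists w : A, (exists w', (w * w' = 1)%R) /\
    forall e : Rdefinitions.R, exists n0 : nat, forall n : nat,
      (n0 <= n)%N -> e%:E <= v (w ^+ n)%R.

Section Mahler.
Variables (p d : nat) (M : zmodType).

Definition zpv_add (x y : 'I_d -> Zpadic p) : 'I_d -> Zpadic p :=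
  fun i => zp_add (x i) (y i).

Definition zpv_zero : 'I_d -> Zpadic p := fun _ => zp_nat p 0.

Definition zpv_unit (i : 'I_d) : 'I_d -> Zpadic p :=
  fun j => if j == i then zp_one p else zp_nat p 0.

Definition zpv_scale_pl (l : nat) (x : 'I_d -> Zpadic p) : 'I_d -> Zpadic p :=
  fun i => zp_mul (zp_nat p (p ^ l)) (x i).

Definition Delta (y : 'I_d -> Zpadic p) (f : ('I_d -> Zpadic p) -> M) :
    ('I_d -> Zpadic p) -> M :=
  fun x => (f (zpv_add x y) - f x)%R.

Definition Delta_pow (n : 'I_d -> nat) :
    (('I_d -> Zpadic p) -> M) -> (('I_d -> Zpadic p) -> M) :=
  foldr (fun i F => fun f => iter (n i) (Delta (zpv_unit i)) (F f)) id
        (enum 'I_d).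

Definition mahler_coef (n : 'I_d -> nat) (f : ('I_d -> Zpadic p) -> M) : M :=
  Delta_pow n f zpv_zero.

Definition multi_abs (n : 'I_d -> nat) : nat := (\sum_(i < d) n i)%N.

Definition zpv_near (k : nat) (x y : 'I_d -> Zpadic p) : Prop :=
  forall i, zval (x i) k = zval (y i) k.

Variable vM : M -> \bar Rdefinitions.R.

Definition zp_continuous (f : ('I_d -> Zpadic p) -> M) : Prop :=
  forall (x : 'I_d -> Zpadic p) (e : Rdefinitions.R), exists k : nat,
    forall y, zpv_near k x y -> e%:E <= vM (f y - f x)%R.

Definition is_lambda_an (lam : Rdefinitions.R) (f : ('I_d -> Zpadic p) -> M) : Prop :=
  zp_continuous f /\
  forall B : Rdefinitions.R, exists N : nat, forall n : 'I_d -> nat,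
    (N <= multi_abs n)%N ->
    B%:E <= vM (mahler_coef n f)
            - ((p%:R `^ lam) * (multi_abs n)%:R)%R%:E.

End Mahler.

(* Main.v *)
Require Import Defs.
From mathcomp Require Import all_boot all_order all_algebra.
From mathcomp Require Import all_classical all_reals all_analysis.
From mathcomp Require Import Rstruct Rstruct_topology.
From mathcomp Require Import ring lra zify.
Import Order.TTheory GRing.Theory Num.Theory.
Set Implicit Arguments.
Unset Strict Implicit.
Unset Printing Implicit Defensive.

Lemma zp_eq p (x y : Zpadic p) : (forall n, zval x n = zval y n) -> x = y.
Proof.
case: x y => [fx hx] [fy hy] /= H.
have E : fx = fy by apply: funext.
subst fy; congr MkZp; exact: Prop_irrelevance.
Qed.

Lemma zvalE p (x : Zpadic p) n : zval x n %% p ^ n = zval x n.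
Proof. by case: (zvalP x n). Qed.

Lemma zp_add0 p (x : Zpadic p) : zp_add x (zp_nat p 0) = x.
Proof. by apply: zp_eq => n /=; rewrite mod0n addn0 zvalE. Qed.

Lemma zp_addAC p (x y z : Zpadic p) : zp_add (zp_add x y) z = zp_add (zp_add x z) y.
Proof. by apply: zp_eq => n /=; rewrite !modnDml addnAC. Qed.

Lemma zp_addS p (x : Zpadic p) m :
  zp_add (zp_add x (zp_nat p m)) (zp_one p) = zp_add x (zp_nat p m.+1).
Proof.
apply: zp_eq => n /=; rewrite modnDml modnDmr -addnA modnDmr.
by apply/eqP; rewrite eqn_modDl modnDml addn1.
Qed.

Lemma zp_mulDr p (c x y : Zpadic p) :
  zp_mul c (zp_add x y) = zp_add (zp_mul c x) (zp_mul c y).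
Proof. by apply: zp_eq => n /=; rewrite modnMmr modnDm mulnDr. Qed.

Lemma zp_mul0 p c : zp_mul (zp_nat p c) (zp_nat p 0) = zp_nat p 0.
Proof. by apply: zp_eq => n /=; rewrite mod0n muln0 mod0n. Qed.

Lemma zp_mul1 p c : zp_mul (zp_nat p c) (zp_one p) = zp_nat p c.
Proof. by apply: zp_eq => n /=; rewrite modnMm muln1. Qed.
Section Ops.
Variables (p d : nat) (M : zmodType).
Local Notation X := ('I_d -> Zpadic p).
Local Open Scope ring_scope.

Definition ue (i : 'I_d) (m : nat) : X :=
  fun j => if j == i then zp_nat p m else zp_nat p 0.

Definition DPs (w : 'I_d -> X) (s : seq 'I_d) (n : 'I_d -> nat) :
  (X -> M) -> (X -> M) :=
  foldr (fun i F f => iter (n i) (Delta (w i)) (F f)) id s.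

Lemma Delta_powE n (h : X -> M) : Delta_pow n h = DPs (zpv_unit p (d:=d)) (enum 'I_d) n h.
Proof. by []. Qed.

Lemma ue0 (i : 'I_d) (x : X) : zpv_add x (ue i 0) = x.
Proof. by apply: funext => k; rewrite /zpv_add /ue; case: ifP => _; rewrite zp_add0. Qed.

Lemma ueS (i : 'I_d) m (x : X) :
  zpv_add x (ue i m.+1) = zpv_add (zpv_add x (ue i m)) (zpv_unit p i).
Proof.
apply: funext => k; rewrite /zpv_add /ue /zpv_unit; case: ifP => _.
  by rewrite zp_addS.
by rewrite !zp_add0.
Qed.

Lemma shift_expand (i : 'I_d) m (h : X -> M) x :
  h (zpv_add x (ue i m)) =
  \sum_(j < m.+1) iter j (Delta (zpv_unit p i)) h x *+ 'C(m, j).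
Proof.
elim: m h => [|m IH] h.
  by rewrite ue0 big_ord_recl big_ord0 /= addr0.
have -> : h (zpv_add x (ue i m.+1)) =
   h (zpv_add x (ue i m)) + Delta (zpv_unit p i) h (zpv_add x (ue i m)).
  by rewrite ueS /Delta addrC subrK.
rewrite IH IH.
rewrite [RHS]big_ord_recl /= bin0.
under [X in _ = _ + X]eq_bigr => j _ do rewrite binS mulrnDr.
rewrite big_split /= addrA.
congr (_ + _); last first.
  by apply: eq_bigr => j _; rewrite add0n -iterS iterSr.
rewrite [in RHS]big_ord_recr /= bin_small // mulr0n addr0.
rewrite big_ord_recl /=.
by congr (_ + _); rewrite bin0.
Qed.

Lemma Delta_ue (i : 'I_d) m (h : X -> M) :
  Delta (ue i m) h =
  fun x => \sum_(j < m) iter j.+1 (Delta (zpv_unit p i)) h x *+ 'C(m, j.+1).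
Proof.
apply: funext => x; rewrite {1}/Delta shift_expand big_ord_recl /= bin0 mulr1n.
rewrite addrC addKr; apply: eq_bigr => j _.
by rewrite add0n -iterS.
Qed.

Lemma Delta_sum y m (F : 'I_m -> X -> M) (c : 'I_m -> nat) :
  Delta y (fun x => \sum_(j < m) F j x *+ c j) =
  fun x => \sum_(j < m) Delta y (F j) x *+ c j.
Proof.
apply: funext => x; rewrite /Delta -sumrB; apply: eq_bigr => j _.
by rewrite mulrnBl.
Qed.

Lemma iter_sum y k m (F : 'I_m -> X -> M) (c : 'I_m -> nat) :
  iter k (Delta y) (fun x => \sum_(j < m) F j x *+ c j) =
  fun x => \sum_(j < m) iter k (Delta y) (F j) x *+ c j.
Proof. by elim: k => [|k IH] //=; rewrite IH Delta_sum. Qed.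

Lemma DPs_sum w s n m (F : 'I_m -> X -> M) (c : 'I_m -> nat) :
  DPs w s n (fun x => \sum_(j < m) F j x *+ c j) =
  fun x => \sum_(j < m) DPs w s n (F j) x *+ c j.
Proof. by elim: s => [|a s IH] //=; rewrite IH iter_sum. Qed.

Lemma zpv_addAC (x y z : X) : zpv_add (zpv_add x y) z = zpv_add (zpv_add x z) y.
Proof. by apply: funext => k; rewrite /zpv_add zp_addAC. Qed.

Lemma Delta_comm y z (h : X -> M) : Delta y (Delta z h) = Delta z (Delta y h).
Proof.
apply: funext => x; rewrite /Delta zpv_addAC.
set a := h _; set b := h (zpv_add x y); set c := h (zpv_add x z).
rewrite !opprB !addrA addrAC [RHS]addrAC; congr (_ + _); exact: addrAC.
Qed.

Lemma Delta_iter_comm y z k (h : X -> M) :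
  Delta y (iter k (Delta z) h) = iter k (Delta z) (Delta y h).
Proof. by elim: k => [|k IH] //=; rewrite Delta_comm IH. Qed.

Lemma Delta_DPs_comm y w s n (h : X -> M) :
  Delta y (DPs w s n h) = DPs w s n (Delta y h).
Proof. by elim: s => [|a s IH] //=; rewrite Delta_iter_comm IH. Qed.

Lemma DPs_eq w s n n' (h : X -> M) : {in s, n =1 n'} -> DPs w s n h = DPs w s n' h.
Proof.
elim: s => [|a s IH] //= H.
have -> : DPs w s n h = DPs w s n' h.
  by apply: IH => k ks; apply: H; rewrite in_cons ks orbT.
by rewrite H ?mem_head.
Qed.

Definition addm (n : 'I_d -> nat) (i : 'I_d) (j : nat) : 'I_d -> nat :=
  fun k => if k == i then (n k + j)%N else n k.

Lemma DPs_Delta w s n i (h : X -> M) : uniq s -> i \in s ->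
  DPs w s n (Delta (w i) h) = DPs w s (addm n i 1) h.
Proof.
elim: s => [|a s IH] //= /andP [ans us].
rewrite in_cons => /orP [/eqP ia | iS].
  subst a.
  rewrite (@DPs_eq w s (addm n i 1) n); last first.
    by move=> k ks; rewrite /addm; case: eqP => // ki; subst k; rewrite ks in ans.
  by rewrite -Delta_DPs_comm /addm eqxx addn1 iterSr.
rewrite IH //; congr iter; rewrite /addm; case: eqP => // ai; subst a.
by rewrite iS in ans.
Qed.

Lemma DPs_iter w s n i j (h : X -> M) : uniq s -> i \in s ->
  DPs w s n (iter j (Delta (w i)) h) = DPs w s (addm n i j) h.
Proof.
move=> us iS; elim: j n h => [|j IH] n h /=.
  by apply: DPs_eq => k _; rewrite /addm; case: eqP; rewrite ?addn0.
rewrite Delta_iter_comm IH DPs_Delta //; apply: DPs_eq => k _; rewrite /addm.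
by case: (k =P i) => [->|//]; rewrite addn1 addnS.
Qed.

Lemma DPs0 w s (h : X -> M) : DPs w s (fun _ => 0%N) h = h.
Proof. by elim: s => [|a s IH] //=; rewrite IH. Qed.

Lemma multi_abs_addm n i j : multi_abs (addm n i j) = (multi_abs n + j)%N.
Proof.
rewrite /multi_abs (bigD1 i) //= [in RHS](bigD1 i) //= /addm eqxx -addnA addnAC addnA.
congr (_ + _)%N; apply: eq_bigr => k /negPf ->; by [].
Qed.

End Ops.
Arguments ue {p d} i m _.
Arguments DPs {p d M} w s n _ _.
Arguments addm {d} n i j _.


Section Scale.
Variables (p d : nat) (M : zmodType) (l : nat).
Local Notation X := ('I_d -> Zpadic p).
Local Notation S := (@zpv_scale_pl p d l).
Local Open Scope ring_scope.

Lemma S_add (x y : X) : S (zpv_add x y) = zpv_add (S x) (S y).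
Proof. by apply: funext => k; rewrite /zpv_scale_pl /zpv_add zp_mulDr. Qed.

Lemma S_zero : S (zpv_zero p (d:=d)) = zpv_zero p (d:=d).
Proof. by apply: funext => k; rewrite /zpv_scale_pl /zpv_zero zp_mul0. Qed.

Lemma S_unit (i : 'I_d) : S (zpv_unit p i) = ue (p:=p) i (p ^ l).
Proof.
apply: funext => k; rewrite /zpv_scale_pl /zpv_unit /ue.
by case: ifP => _; rewrite ?zp_mul1 ?zp_mul0.
Qed.

Lemma Delta_comp y (h : X -> M) :
  Delta y (fun x => h (S x)) = fun x => Delta (S y) h (S x).
Proof. by apply: funext => x; rewrite /Delta S_add. Qed.

Lemma iter_comp y k (h : X -> M) :
  iter k (Delta y) (fun x => h (S x)) = fun x => iter k (Delta (S y)) h (S x).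
Proof. by elim: k => [|k IH] //=; rewrite IH Delta_comp. Qed.

Lemma DPs_comp s n (h : X -> M) :
  DPs (zpv_unit p (d:=d)) s n (fun x => h (S x)) =
  fun x => DPs (fun i => ue (p:=p) i (p ^ l)) s n h (S x).
Proof.
elim: s => [|a s IH] //=; rewrite IH iter_comp.
by rewrite S_unit.
Qed.

Lemma S_near k (x y : X) : zpv_near k x y -> zpv_near k (S x) (S y).
Proof. by move=> H i; rewrite /zpv_scale_pl /= H. Qed.

End Scale.

Lemma mahler_step p d (M : zmodType) (i : 'I_d) P n (h : ('I_d -> Zpadic p) -> M) :
  mahler_coef n (Delta (ue (p:=p) i P) h) =
  (\sum_(j < P) mahler_coef (addm n i j.+1) h *+ 'C(P, j.+1))%R.
Proof.
rewrite /mahler_coef Delta_ue !Delta_powE DPs_sum.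
apply: eq_bigr => j _.
have H := DPs_iter (zpv_unit p (d:=d)) n j.+1 h (enum_uniq 'I_d) (mem_enum _ i).
by congr (_ *+ _)%R; rewrite Delta_powE -H.
Qed.

Lemma bin_pdiv p l m : prime p -> (m < p ^ l)%N ->
  (p ^ (l - logn p m.+1) %| 'C(p ^ l, m.+1))%N.
Proof.
move=> pp ml.
have pg : (0 < p)%N := prime_gt0 pp.
have hC : (0 < 'C(p ^ l, m.+1))%N by rewrite bin_gt0.
have hC' : (0 < 'C((p ^ l).-1, m))%N by rewrite bin_gt0 -ltnS prednK // expn_gt0 pg.
have E := mul_bin_diag (p ^ l) m.
have E2 : (logn p m.+1 + logn p 'C(p ^ l, m.+1) = l + logn p 'C((p ^ l).-1, m))%N.
  by rewrite -lognM // -E lognM ?expn_gt0 ?pg // pfactorK.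
apply: dvdn_trans (pfactor_dvdnn p _); rewrite dvdn_exp2l //.
by rewrite leq_subLR E2 leq_addr.
Qed.

Local Open Scope ring_scope.
Local Open Scope ereal_scope.

Section Val.
Variables (A : comNzRingType) (valA : A -> \bar Rdefinitions.R)
  (hvalA : is_ring_valuation valA)
  (M : lmodType A) (valM : M -> \bar Rdefinitions.R)
  (hvalM : is_module_valuation valA valM).

Lemma valM_sum (r : \bar Rdefinitions.R) m (F : 'I_m -> M) :
  (forall j, r <= valM (F j)) -> r <= valM (\sum_(j < m) F j).
Proof.
case: hvalM => h0 _ _ hD H.
apply: (big_ind (fun y => r <= valM y)) => //.
  by have [_ ->] := h0 0%R; rewrite ?leey.
move=> x y hx hy; apply: le_trans (hD x y).
by rewrite le_min hx hy.
Qed.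

Lemma valM_natmul (y : M) c : valA c%:R + valM y <= valM (y *+ c).
Proof. by case: hvalM => _ _ hZ _; rewrite -scaler_nat. Qed.

Lemma valA_nat u : valA 1 <= valA u%:R.
Proof.
case: hvalA => h0 _ _ hD.
elim: u => [|u IH].
  by have [_ ->] := h0 0%R; rewrite ?leey.
rewrite -addn1 natrD; apply: le_trans (hD _ _).
by rewrite le_min IH /=.
Qed.

Lemma valA_exp (a : Rdefinitions.R) (x : A) e :
  a%:E <= valA x -> (e%:R * a)%:E + valA 1 <= valA (x ^+ e).
Proof.
case: hvalA => _ _ hM _ ha.
elim: e => [|e IH].
  by rewrite mul0r add0e expr0.
rewrite exprS; apply: le_trans (hM _ _).
rewrite -nat1r mulrDl mul1r EFinD -addeA.
exact: leeD.
Qed.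

End Val.

Lemma archi_mul (a T : Rdefinitions.R) : (0 < a)%R -> exists m : nat, (T <= m%:R * a)%R.
Proof.
move=> a0; exists (Num.Def.archi_bound (`|T| / a)).
have := archi_boundP (divr_ge0 (normr_ge0 T) (ltW a0)).
rewrite ltr_pdivrMr // => H; apply: le_trans (ltW H).
exact: ler_norm.
Qed.

Section Good.
Variables (p d : nat) (M : zmodType) (valM : M -> \bar Rdefinitions.R).
Variables (alpha K : Rdefinitions.R) (P : nat).
Variables (A : comNzRingType) (valA : A -> \bar Rdefinitions.R).
Local Notation X := ('I_d -> Zpadic p).

Definition Good (h : X -> M) (beta : Rdefinitions.R) (N : nat) : Prop :=
  forall n, (N <= multi_abs n)%N ->
    (beta + alpha * (multi_abs n)%:R)%R%:E <= valM (mahler_coef n h).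

Lemma Good_mono h b N b' N' : Good h b N -> (b' <= b)%R -> (N <= N')%N ->
  Good h b' N'.
Proof.
move=> G hb hN n hn; apply: le_trans (G n (leq_trans hN hn)).
by rewrite lee_fin lerD2r.
Qed.

Hypothesis step_ok : forall (i : 'I_d) h b N, Good h b N ->
  Good (Delta (ue i P) h) (b + K)%R N.-1.

Lemma Good_iter i t h b N : Good h b N ->
  Good (iter t (Delta (ue i P)) h) (b + K * t%:R)%R (N - t).
Proof.
elim: t => [|t IH] G /=.
  by rewrite GRing.mulr0 GRing.addr0 subn0.
rewrite subnS; apply: Good_mono (step_ok i (IH G)) _ (leqnn _).
by rewrite -addn1 natrD; lra.
Qed.

Lemma Good_DPs s k h b N : Good h b N ->
  Good (DPs (fun i => ue i P) s k h) (b + K * (\sum_(i <- s) k i)%N%:R)%R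
       (N - \sum_(i <- s) k i).
Proof.
elim: s => [|a s IH] G /=.
  by rewrite big_nil mulr0 addr0 subn0.
have := Good_iter a (t:=k a) (IH G).
rewrite big_cons addnC subnDA natrD.
move=> G2; apply: Good_mono G2 _ (leqnn _); lra.
Qed.

End Good.

Lemma Good_step (A : comNzRingType) (valA : A -> \bar Rdefinitions.R)
  (M : lmodType A) (valM : M -> \bar Rdefinitions.R)
  (hvalM : is_module_valuation valA valM) (p d : nat)
  (alpha K : Rdefinitions.R) (P : nat)
  (hC : forall m, (m < P)%N ->
     K%:E <= valA ('C(P, m.+1))%:R + (alpha * m.+1%:R)%R%:E)
  (i : 'I_d) (h : ('I_d -> Zpadic p) -> M) b N :
  Good valM alpha h b N -> Good valM alpha (Delta (ue i P) h) (b + K)%R N.-1.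
Proof.
move=> G n hn; rewrite mahler_step; apply: (valM_sum hvalM) => j.
apply: le_trans (valM_natmul hvalM _ _).
have hn' : (N <= multi_abs (addm n i j.+1))%N.
  rewrite multi_abs_addm; move: hn; case: N {G} => [|N] //= hn.
  by rewrite addnS ltnS (leq_trans hn (leq_addr _ _)).
have := G _ hn'; rewrite multi_abs_addm => Gj.
have e1 : ((b + K + alpha * (multi_abs n)%:R)%R%:E =
          K%:E + (b + alpha * (multi_abs n)%:R)%R%:E).
  by rewrite -EFinD; congr EFin; ring.
rewrite e1; apply: le_trans (leeD (hC j (ltn_ord j)) (lexx _)) _.
rewrite -addeA -EFinD; apply: leeD2l; apply: le_trans Gj.
by rewrite lee_fin natrD; lra.
Qed.

Lemma binom_val (A : comNzRingType) (valA : A -> \bar Rdefinitions.R)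
  (hvalA : is_ring_valuation valA) (p : nat) (pp : prime p)
  (a c0 alpha K : Rdefinitions.R) (ha0 : (0 < a)%R) (ha : a%:E <= valA p%:R)
  (hc0 : valA 1%R = c0%:E) (al0 : (0 < alpha)%R) (mm : nat)
  (hm1 : (K - 2 * c0 <= mm%:R * a)%R) (hm2 : (K - 2 * c0 <= mm%:R * alpha)%R) :
  forall m, (m < p ^ (mm + mm))%N ->
     K%:E <= valA ('C(p ^ (mm + mm), m.+1))%:R + (alpha * m.+1%:R)%R%:E.
Proof.
move=> m mP.
set v := logn p m.+1; set e := (mm + mm - v)%N.
have [u hu] := dvdnP (bin_pdiv pp mP).
have h1 : c0%:E + ((e%:R * a)%R%:E + c0%:E) <= valA ('C(p ^ (mm + mm), m.+1))%:R.
  have [_ _ hM _] := hvalA.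
  rewrite hu natrM natrX; apply: le_trans (hM _ _); apply: leeD.
    by rewrite -hc0; exact: (valA_nat hvalA).
  by rewrite -hc0; exact: (valA_exp hvalA).
have h2 : (p ^ v <= m.+1)%N := dvdn_leq (ltn0Sn m) (pfactor_dvdnn p m.+1).
apply: le_trans (leeD h1 (lexx _)); rewrite -!EFinD lee_fin.
have p1 : (1 < p)%N := prime_gt1 pp.
have p0 : (0 < p)%N := prime_gt0 pp.
have hx0 : (0 <= m.+1%:R :> Rdefinitions.R)%R := ler0n _ _.
have hal : (0 <= alpha * m.+1%:R)%R := mulr_ge0 (ltW al0) hx0.
have hea : (0 <= e%:R * a)%R := mulr_ge0 (ler0n _ _) (ltW ha0).
case: (leqP v mm) => hv.
  have : (mm <= e)%N by rewrite /e; lia.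
  rewrite -(ler_nat Rdefinitions.R) => /(ler_wpM2r (ltW ha0)) H.
  lra.
have : (mm <= m.+1)%N.
  apply: leq_trans (ltnW (ltn_expl mm p1)) _.
  apply: leq_trans h2; rewrite leq_pexp2l //; exact: ltnW.
rewrite -(ler_nat Rdefinitions.R) => /(ler_wpM2l (ltW al0)) H.
lra.
Qed.

Theorem corollary2p7
  (p : nat) (hp : prime p) (d : nat)
  (A : comNzRingType) (valA : A -> \bar Rdefinitions.R)
  (phi : Zpadic p -> A) (hphi : is_Zp_algebra_map phi)
  (hvalA : is_ring_valuation valA) (hTate : is_Tate_valued valA)
  (hvalp : (0 < valA p%:R)%E)
  (M : lmodType A) (valM : M -> \bar Rdefinitions.R)
  (hvalM : is_module_valuation valA valM)
  (lam lam' : Rdefinitions.R) :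
  exists l : nat, forall f : ('I_d -> Zpadic p) -> M,
    is_lambda_an valM lam f ->
    is_lambda_an valM lam' (fun x => f (zpv_scale_pl l x)).
Proof.
have p0 : (0 < p)%N := prime_gt0 hp.
have pR : (0 < p%:R :> Rdefinitions.R)%R by rewrite ltr0n.
set alpha := ((p%:R : Rdefinitions.R) `^ lam)%R; set alpha' := ((p%:R : Rdefinitions.R) `^ lam')%R.
have al0 : (0 < alpha)%R := powR_gt0 _ pR.
set K := (alpha' + 1)%R.
have [a [ha0 ha]] : exists a : Rdefinitions.R, (0 < a)%R /\ a%:E <= valA p%:R.
  move: hvalp; case: (valA p%:R) => [r||//] hr.
    by exists r; split => //; rewrite lte_fin in hr.
  by exists 1%R; split => //; rewrite leey.
have [c0 hc0] : exists c0, valA 1%R = c0%:E.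
  exists (fine (valA 1%R)); rewrite fineK // fin_numE; apply/andP; split.
    by case: hvalA => _ h _ _; apply: h.
  apply/eqP => H; case: hvalA => h _ _ _; have := (h 1%R).1 H.
  by apply/eqP; exact: oner_neq0.
have [m1 hm1] := archi_mul (K - 2 * c0)%R ha0.
have [m2 hm2] := archi_mul (K - 2 * c0)%R al0.
set mm := (m1 + m2)%N.
have hmm1 : (K - 2 * c0 <= mm%:R * a)%R.
  have : (0 <= m2%:R * a :> Rdefinitions.R)%R := mulr_ge0 (ler0n _ _) (ltW ha0).
  rewrite /mm natrD; lra.
have hmm2 : (K - 2 * c0 <= mm%:R * alpha)%R.
  have : (0 <= m1%:R * alpha :> Rdefinitions.R)%R := mulr_ge0 (ler0n _ _) (ltW al0).
  rewrite /mm natrD; lra.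
exists (mm + mm)%N.
have hC := binom_val hvalA hp ha0 ha hc0 al0 hmm1 hmm2.
move=> f [cf hf]; split.
  move=> x e; have [k hk] := cf (zpv_scale_pl (mm + mm) x) e.
  by exists k => y hy; apply: hk; apply: S_near.
move=> B.
have [N0 hN0] := hf 0%R.
have G0 : Good valM alpha f 0%R N0.
  move=> n hn; have := hN0 n hn.
  by rewrite sube_ge0 ?add0r // orbT.
have [m' hm'] := archi_mul B ltr01.
rewrite mulr1 in hm'.
exists (maxn N0 m') => k hk.
have step := Good_step hvalM hC (p:=p) (d:=d).
have GD := Good_DPs step (s:=enum 'I_d) (k:=k) G0.
have sumE : (\sum_(i <- enum 'I_d) k i)%N = multi_abs k.
  by rewrite big_enum.
rewrite sumE in GD.
have H0 := GD (fun _ => 0%N).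
have ma0 : multi_abs (fun _ : 'I_d => 0%N) = 0%N by rewrite /multi_abs big1.
rewrite ma0 in H0.
have hk1 : (N0 <= multi_abs k)%N := leq_trans (leq_maxl _ _) hk.
have hk2 : (m' <= multi_abs k)%N := leq_trans (leq_maxr _ _) hk.
have H1 : (N0 - multi_abs k <= 0)%N by rewrite leqn0 subn_eq0.
have {H1}H0 := H0 H1.
rewrite /mahler_coef Delta_powE DPs0 in H0.
rewrite /mahler_coef Delta_powE DPs_comp S_zero.
rewrite leeBrDr // -EFinD; apply: le_trans H0; rewrite lee_fin.
have : (m'%:R <= (multi_abs k)%:R :> Rdefinitions.R)%R by rewrite ler_nat.
rewrite /K /alpha' /alpha; lra.
Qed.
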